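(* Let $\mathbf{b}\in H_{1,2,2}$ have odd norm $N(\mathbf{b})$. Then there is a unit $\mathbf{u}$ of $H_{1,2,2}$ with $\mathbf{b}-\mathbf{u}\in 2H_{1,2,2}$.
   Context: Let $\mathbf{i},\mathbf{j},\mathbf{k}$ be the standard quaternion units; $\overline{\mathbf{q}}$ is quaternion conjugation and $N(\mathbf{q})=\mathbf{q}\overline{\mathbf{q}}$. $H_{1,2,2}$ is the subring of the quaternions equal to the $\mathbb{Z}$-module generated by $\mathbf{v}_1=1$, $\mathbf{v}_2=\mathbf{i}$, $\mathbf{v}_3=\tfrac12(1+\mathbf{i}+\sqrt2\,\mathbf{j})$, $\mathbf{v}_4=\tfrac12(1+\mathbf{i}+\sqrt2\,\mathbf{k})$. A unit of $H_{1,2,2}$ is an element invertible in $H_{1,2,2}$ (equivalently, an element of norm $1$). *)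

(* Defs.v *)
From HB Require Import structures.
From mathcomp Require Import all_boot all_order all_algebra.
Set Implicit Arguments. Unset Strict Implicit. Unset Printing Implicit Defensive.
Import Order.TTheory GRing.Theory Num.Theory.
Local Open Scope ring_scope.

Section Quat.
Variable R : rcfType.

(* q = x0 + x1 i + x2 j + x3 k *)
Record quat := Quat { q0 : R; q1 : R; q2 : R; q3 : R }.

Definition qadd (p q : quat) : quat :=
  Quat (q0 p + q0 q) (q1 p + q1 q) (q2 p + q2 q) (q3 p + q3 q).
Definition qopp (p : quat) : quat := Quat (- q0 p) (- q1 p) (- q2 p) (- q3 p).
Definition qsub (p q : quat) : quat := qadd p (qopp q).
(* Hamilton product: i^2 = j^2 = k^2 = ijk = -1 *)
Definition qmul (p q : quat) : quat :=
  Quat (q0 p * q0 q - q1 p * q1 q - q2 p * q2 q - q3 p * q3 q)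
       (q0 p * q1 q + q1 p * q0 q + q2 p * q3 q - q3 p * q2 q)
       (q0 p * q2 q - q1 p * q3 q + q2 p * q0 q + q3 p * q1 q)
       (q0 p * q3 q + q1 p * q2 q - q2 p * q1 q + q3 p * q0 q).
Definition qreal (r : R) : quat := Quat r 0 0 0.
Definition qone : quat := qreal 1.
Definition qi : quat := Quat 0 1 0 0.
Definition qj : quat := Quat 0 0 1 0.
Definition qk : quat := Quat 0 0 0 1.
Definition qconj (p : quat) : quat := Quat (q0 p) (- q1 p) (- q2 p) (- q3 p).
Definition qN (p : quat) : quat := qmul p (qconj p).
Definition qzscale (z : int) (p : quat) : quat := qmul (qreal z%:~R) p.

Definition v1 : quat := qone.
Definition v2 : quat := qi.
Definition v3 : quat :=
  qmul (qreal (2^-1)) (qadd (qadd qone qi) (qmul (qreal (Num.sqrt 2)) qj)).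
Definition v4 : quat :=
  qmul (qreal (2^-1)) (qadd (qadd qone qi) (qmul (qreal (Num.sqrt 2)) qk)).

Definition inH (q : quat) : Prop :=
  exists a b c d : int,
    q = qadd (qadd (qzscale a v1) (qzscale b v2)) (qadd (qzscale c v3) (qzscale d v4)).

Definition unitH (u : quat) : Prop :=
  inH u /\ exists w, inH w /\ qmul u w = qone /\ qmul w u = qone.

Definition odd_norm (q : quat) : Prop :=
  exists k : int, qN q = qreal ((2 * k + 1)%:~R).

Definition in2H (q : quat) : Prop := exists h, inH h /\ q = qzscale 2 h.

End Quat.

(* Main.v *)
Require Import Defs.
From mathcomp Require Import all_boot all_order all_algebra.
From mathcomp Require Import ring lra zify.
Import Order.TTheory GRing.Theory Num.Theory.
Local Open Scope ring_scope.

Section Aux.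
Variable R : rcfType.

Definition mk (a b c d : int) : quat R :=
  qadd (qadd (qzscale a (v1 R)) (qzscale b (v2 R))) (qadd (qzscale c (v3 R)) (qzscale d (v4 R))).

Definition fi (a b c d : int) : int :=
  a*a + b*b + c*c + d*d + c*d + (c+d)*(a+b).


Local Notation s := (Num.sqrt (2:R)).

Lemma v1E : v1 R = Quat 1 0 0 0. Proof. by []. Qed.
Lemma v2E : v2 R = Quat 0 1 0 0. Proof. by []. Qed.
Lemma v3E : v3 R = Quat (2^-1) (2^-1) (s / 2) 0.
Proof.
rewrite /v3 /qmul /qadd /qone /qreal /qi /qj; cbn [q0 q1 q2 q3]; congr Quat; by field.
Qed.
Lemma v4E : v4 R = Quat (2^-1) (2^-1) 0 (s / 2).
Proof.
rewrite /v4 /qmul /qadd /qone /qreal /qi /qk; cbn [q0 q1 q2 q3]; congr Quat; by field.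
Qed.
Lemma qzscaleE (z : int) (p : quat R) :
  qzscale z p = Quat (z%:~R * q0 p) (z%:~R * q1 p) (z%:~R * q2 p) (z%:~R * q3 p).
Proof. case: p => p0 p1 p2 p3; rewrite /qzscale /qmul /qreal; cbn [q0 q1 q2 q3]; congr Quat; ring. Qed.

Lemma mkE (a b c d : int) : mk a b c d =
  Quat (a%:~R + (c%:~R + d%:~R) / 2) (b%:~R + (c%:~R + d%:~R) / 2) (c%:~R * s / 2) (d%:~R * s / 2).
Proof.
rewrite /mk !qzscaleE v1E v2E v3E v4E /qadd; cbn [q0 q1 q2 q3]; congr Quat; by field.
Qed.

Lemma sqrt2E : s ^+ 2 = 2.
Proof. by rewrite sqr_sqrtr // ler0n. Qed.

Lemma unit_of (a b c d : int) : fi a b c d = 1 -> unitH (mk a b c d).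
Proof.
move=> Hf.
have HfR : (a%:~R * a%:~R + b%:~R * b%:~R + c%:~R * c%:~R + d%:~R * d%:~R
   + c%:~R * d%:~R + (c%:~R + d%:~R) * (a%:~R + b%:~R) : R) = 1.
  transitivity ((fi a b c d)%:~R : R); first by rewrite /fi; ring.
  by rewrite Hf.
have Hs := sqrt2E.
split; first by exists a, b, c, d.
exists (mk (a + c + d) (- b) (- c) (- d)); split; first by exists (a + c + d), (- b), (- c), (- d).
rewrite !mkE /qmul /qone /qreal; cbn [q0 q1 q2 q3].
split; congr Quat.
- apply: (etrans _ HfR); apply/eqP; rewrite -subr_eq0; apply/eqP.
  transitivity ((s ^+ 2 - 2) * ((c%:~R * c%:~R + d%:~R * d%:~R) / 4)).
  by field.
  by rewrite Hs subrr mul0r.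
- by field.
- by field.
- by field.
- apply: (etrans _ HfR); apply/eqP; rewrite -subr_eq0; apply/eqP.
  transitivity ((s ^+ 2 - 2) * ((c%:~R * c%:~R + d%:~R * d%:~R) / 4)).
  by field.
  by rewrite Hs subrr mul0r.
- by field.
- by field.
- by field.
Qed.

Lemma close (x1 x2 x3 x4 y1 y2 y3 y4 : int) :
  fi y1 y2 y3 y4 = 1 ->
  ((x1 - y1) %% 2 = 0)%Z -> ((x2 - y2) %% 2 = 0)%Z ->
  ((x3 - y3) %% 2 = 0)%Z -> ((x4 - y4) %% 2 = 0)%Z ->
  exists u : quat R, unitH u /\ in2H (qsub (mk x1 x2 x3 x4) u).
Proof.
move=> Hf H1 H2 H3 H4.
exists (mk y1 y2 y3 y4); split; first exact: unit_of.
have E1 := divz_eq (x1 - y1) 2; rewrite H1 addr0 in E1.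
have E2 := divz_eq (x2 - y2) 2; rewrite H2 addr0 in E2.
have E3 := divz_eq (x3 - y3) 2; rewrite H3 addr0 in E3.
have E4 := divz_eq (x4 - y4) 2; rewrite H4 addr0 in E4.
move: ((x1 - y1) %/ 2)%Z ((x2 - y2) %/ 2)%Z ((x3 - y3) %/ 2)%Z ((x4 - y4) %/ 2)%Z E1 E2 E3 E4
  => k1 k2 k3 k4 E1 E2 E3 E4.
have -> : x1 = y1 + k1 * 2 by rewrite -E1; ring.
have -> : x2 = y2 + k2 * 2 by rewrite -E2; ring.
have -> : x3 = y3 + k3 * 2 by rewrite -E3; ring.
have -> : x4 = y4 + k4 * 2 by rewrite -E4; ring.
exists (mk k1 k2 k3 k4); split; first by exists k1, k2, k3, k4.
rewrite !mkE /qsub /qopp qzscaleE /qadd; cbn [q0 q1 q2 q3].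
by congr Quat; field.
Qed.

End Aux.

Theorem lemma7 (R : rcfType) (b : quat R) :
  inH b -> odd_norm b ->
  exists u : quat R, unitH u /\ in2H (qsub b u).
Proof.
move=> [x1 [x2 [x3 [x4 Hb]]]] [k Hk].
have Hb' : b = mk R x1 x2 x3 x4 by [].
have Hint : fi x1 x2 x3 x4 = 2 * k + 1.
  apply: (@intr_inj R).
  have := congr1 (@q0 R) Hk; rewrite Hb' /qN /qconj.
  rewrite mkE /qmul /qreal; cbn [q0 q1 q2 q3] => <-.
  have Hs := sqrt2E R; set s := Num.sqrt (2:R) in Hs *.
  apply/eqP; rewrite -subr_eq0; apply/eqP.
  transitivity ((2 - s ^+ 2) * ((x3%:~R * x3%:~R + x4%:~R * x4%:~R) / 4)).
  rewrite /fi; by field.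
  by rewrite Hs subrr mul0r.
rewrite Hb' {Hb Hb' Hk}.
move: Hint; rewrite /fi => Hint.
have [r1 [k1 [E1 R1]]] : exists r k : int, x1 = 2 * k + r /\ (r = 0 \/ r = 1).
  exists (x1 %% 2)%Z, (x1 %/ 2)%Z; split; [rewrite {1}(divz_eq x1 2); ring | lia].
have [r2 [k2 [E2 R2]]] : exists r k : int, x2 = 2 * k + r /\ (r = 0 \/ r = 1).
  exists (x2 %% 2)%Z, (x2 %/ 2)%Z; split; [rewrite {1}(divz_eq x2 2); ring | lia].
have [r3 [k3 [E3 R3]]] : exists r k : int, x3 = 2 * k + r /\ (r = 0 \/ r = 1).
  exists (x3 %% 2)%Z, (x3 %/ 2)%Z; split; [rewrite {1}(divz_eq x3 2); ring | lia].
have [r4 [k4 [E4 R4]]] : exists r k : int, x4 = 2 * k + r /\ (r = 0 \/ r = 1).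
  exists (x4 %% 2)%Z, (x4 %/ 2)%Z; split; [rewrite {1}(divz_eq x4 2); ring | lia].
subst x1 x2 x3 x4.
case: R1 => ?; subst r1; case: R2 => ?; subst r2; case: R3 => ?; subst r3; case: R4 => ?; subst r4;
first [ exfalso; lia
      | apply (@close R _ _ _ _ 1 0 0 0); rewrite /fi; lia
      | apply (@close R _ _ _ _ 0 1 0 0); rewrite /fi; lia
      | apply (@close R _ _ _ _ 0 0 1 0); rewrite /fi; lia
      | apply (@close R _ _ _ _ 0 0 0 1); rewrite /fi; lia
      | apply (@close R _ _ _ _ 0 0 1 (-1)); rewrite /fi; lia
      | apply (@close R _ _ _ _ (-1) (-1) 1 1); rewrite /fi; lia
      | apply (@close R _ _ _ _ (-1) 0 1 0); rewrite /fi; lia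
      | apply (@close R _ _ _ _ 0 (-1) 1 0); rewrite /fi; lia
      | apply (@close R _ _ _ _ (-1) (-1) 1 0); rewrite /fi; lia
      | apply (@close R _ _ _ _ (-1) 0 0 1); rewrite /fi; lia
      | apply (@close R _ _ _ _ 0 (-1) 0 1); rewrite /fi; lia
      | apply (@close R _ _ _ _ (-1) (-1) 0 1); rewrite /fi; lia ].
Qed.
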